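(* Consider RESIDUE-THROW-DIVISOR. For all $n\in \mathbb{N}$, $\mathcal{SG}(n)=k$ if $$n\in \{3(2^{k-1}-1)+2,\ldots , 3(2^k-1)+1 \}.$$
   Context: RESIDUE-THROW-DIVISOR is the impartial normal-play heap game where a move from a heap $n$ writes $n=kd+r$ with $1\le d<n$, $0\le r<d$, and moves to the single heap $r$ (the remainder; the $k$ copies of $d$ are discarded); heaps of size $0$ and $1$ have no options. $\mathcal{SG}$ denotes the Sprague-Grundy value (mex rule). *)

(* Defs.v *)
From mathcomp Require Import all_boot.
Set Implicit Arguments. Unset Strict Implicit. Unset Printing Implicit Defensive.

(* RESIDUE-THROW-DIVISOR: from heap n, choose 1 <= d < n, write n = k d + r
   with 0 <= r < d, and move to heap r = n %% d. *)
Definition rtd_options (n : nat) : seq nat :=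
  [seq n %% d | d <- iota 1 n.-1].

Definition mex (s : seq nat) : nat :=
  find (fun m => m \notin s) (iota 0 (size s).+1).

(* Sprague-Grundy value, computed by recursion with fuel (options are < n) *)
Fixpoint sg_fuel (fuel n : nat) : nat :=
  match fuel with
  | 0 => 0
  | f.+1 => mex [seq sg_fuel f r | r <- rtd_options n]
  end.

Definition SG (n : nat) : nat := sg_fuel n.+1 n.

Example SG_test : [seq SG n | n <- iota 0 12] = [:: 0;0;1;1;1;2;2;2;2;2;2;3].
Proof. by vm_compute. Qed.

(* Main.v *)
Require Import Defs.
From mathcomp Require Import all_boot.
From mathcomp Require Import zify.

Lemma fuel_eq f g n : n < f -> n < g -> sg_fuel f n = sg_fuel g n.
Proof.
elim: f g n => [|f IH] [|g] n //= Hf Hg.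
congr mex; apply eq_in_map => r /mapP [d Hd ->].
rewrite mem_iota in Hd.
have : n %% d < d by apply: ltn_pmod; lia.
move=> H; apply IH; lia.
Qed.

Lemma opt_lt n r : r \in rtd_options n -> r.*2 < n.
Proof.
move=> /mapP [d Hd ->]; rewrite mem_iota in Hd.
have H1 : n %% d < d by apply: ltn_pmod; lia.
have H2 : n = n %/ d * d + n %% d by rewrite -divn_eq.
have H3 : 0 < n %/ d by rewrite divn_gt0; lia.
nia.
Qed.

Lemma opt_in n r : 1 < n -> r.*2 < n -> r \in rtd_options n.
Proof.
move=> Hn Hr; apply/mapP.
case: r Hr => [|r] Hr.
  by exists 1; [rewrite mem_iota; lia | rewrite modn1].
exists (n - r.+1); first by rewrite mem_iota; lia.
have Hle : r.+1 <= n by lia.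
rewrite -{1}(subnK Hle) modnDl modn_small; lia.
Qed.

Lemma SG_rec n : SG n = mex [seq SG r | r <- rtd_options n].
Proof.
transitivity (mex [seq sg_fuel n r | r <- rtd_options n]); first by [].
congr mex; apply eq_in_map => r Hr; rewrite /SG.
have := @opt_lt _ _ Hr => H.
apply fuel_eq; lia.
Qed.

Lemma find_iota (P : pred nat) k m N :
  m <= k < m + N -> (forall j, m <= j < k -> ~~ P j) -> P k ->
  find P (iota m N) = k - m.
Proof.
elim: N m => [|N IH] m Hk Hj Pk; first lia.
rewrite /= .
case: (eqVneq m k) => [->|Hmk]; first by rewrite Pk subnn.
have -> : P m = false by apply/negbTE/Hj; lia.
rewrite IH //; [lia|lia|]. move=> j Hj'; apply Hj; lia.
Qed.

Lemma mex_spec s k : (forall j, j < k -> j \in s) -> k \notin s -> mex s = k.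
Proof.
move=> Hin Hk.
have Hsz : k <= size s.
  rewrite -(size_iota 0 k); apply: uniq_leq_size; first exact: iota_uniq.
  by move=> j; rewrite mem_iota => Hj; apply Hin; lia.
rewrite /mex (@find_iota _ k) ?subn0 //.
move=> j Hj; apply/negPn; apply Hin; lia.
Qed.

Definition fcl n := if n.+1 %/ 3 == 0 then 0 else (trunc_log 2 (n.+1 %/ 3)).+1.

Lemma fge j n : (j.+1 <= fcl n) = (3 * 2 ^ j <= n.+1).
Proof.
rewrite /fcl; case: eqP => Hq.
  have : n.+1 < 3 by move: Hq; lia.
  have : 0 < 2 ^ j by rewrite expn_gt0.
  move=> ? ?; apply/esym/negbTE; lia.
rewrite ltnS mulnC -leq_divRL //.
apply/idP/idP => H.
  apply: leq_trans (@trunc_logP 2 _ _ _) => //; last lia.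
  by rewrite leq_exp2l.
by apply: trunc_log_max.
Qed.

Lemma SG_fcl n : SG n = fcl n.
Proof.
elim/ltn_ind: n => n IH.
case: n IH => [|[|n]] IH; first by vm_compute.
  by vm_compute.
rewrite SG_rec.
have -> : [seq SG r | r <- rtd_options n.+2] = [seq fcl r | r <- rtd_options n.+2].
  apply eq_in_map => r Hr; apply IH; have := @opt_lt _ _ Hr; lia.
apply mex_spec.
- move=> j Hj; apply/mapP.
  case: j Hj => [|i] Hi.
    exists 0; last by vm_compute.
    by apply opt_in.
  rewrite fge in Hi.
  have Hx : 0 < 2 ^ i by rewrite expn_gt0.
  rewrite expnS in Hi.
  exists (3 * 2 ^ i).-1.
    apply opt_in => //; lia.
  apply/eqP; rewrite eqn_leq; apply/andP; split.
    rewrite fge; lia.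
  rewrite leqNgt fge expnS; lia.
- apply/negP => /mapP => [[r Hr Heq]].
  have H2 := @opt_lt _ _ Hr.
  have H1 : 1 <= fcl n.+2 by rewrite fge expn0; lia.
  move: Heq H1; case E: (fcl n.+2) => [|k] // Heq _.
  have : k.+1 <= fcl r by rewrite -Heq.
  rewrite fge => Hk.
  have : k.+2 <= fcl n.+2 by rewrite fge expnS; lia.
  by rewrite E ltnn.
Qed.

Theorem mainTheorem12 (n k : nat) :
  1 <= k ->
  3 * (2 ^ k.-1 - 1) + 2 <= n <= 3 * (2 ^ k - 1) + 1 ->
  SG n = k.
Proof.
case: k => [|k] // _ /=.
rewrite SG_fcl expnS => Hn.
have Hx : 0 < 2 ^ k by rewrite expn_gt0.
apply/eqP; rewrite eqn_leq; apply/andP; split.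
  rewrite leqNgt fge expnS; lia.
rewrite fge; lia.
Qed.
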